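(* In the finite-sum setting, run Algorithm LCSVRG with parameter $\gamma$ and let $\beta\in(0,2\gamma-L_0)$ be such that $$\tilde L:=\frac{2\gamma-\beta-L_0}{2}-\frac{L_0^2(T-1)}{2\beta b}>0.$$ Then, with $x^{(r,t)}:=x^{rT+t}$, for every epoch $r\ge0$ and every $0\le t<T$, $$\tilde L\sum_{j=0}^t\mathbb{E}\|x^{(r,j+1)}-x^{(r,j)}\|^2\le\mathbb{E}[\psi_0(x^{(r,0)})]-\mathbb{E}[\psi_0(x^{(r,t+1)})].$$
   Context: Problem (P): minimize $\psi_0(x):=f_0(x)+\chi_0(x)$ over $x\in\mathbb{R}^d$ subject to $\psi_i(x):=f_i(x)+\chi_i(x)\le\eta_i$, $i\in[m]:=\{1,\dots,m\}$, with $\chi_0$ proper convex lsc, $\chi_i$ convex continuous on $\mathrm{dom}\,\chi_0$, $f_i$ with $L_i$-Lipschitz gradients, finite optimal value, and nonempty compact feasible set; vector inequalities componentwise. Finite-sum setting: $f_0(x)=\frac1n\sum_{j=1}^nF(x,\xi_j)$ where each $F(\cdot,\xi_j)$ has $L_0$-Lipschitz gradient. Algorithm LCSVRG: given $x^0\in\mathrm{dom}\,\chi_0$, $\eta^0$ with $\psi(x^0)<\eta^0<\eta$, epoch length $T$, batch size $b$, $\gamma>0$. At step $k$: if $k$ is a multiple of $T$, set $G^k=\nabla f_0(x^k)$; otherwise draw a mini-batch $B_k$ of $b$ indices independently and uniformly from $\{1,\dots,n\}$ and set $G^k=\frac1b\sum_{j\in B_k}[\nabla F(x^k,\xi_j)-\nabla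 F(x^{k-1},\xi_j)]+G^{k-1}$. Set $\psi_0^k(x)=\langle G^k,x\rangle+\frac{\gamma}{2}\|x-x^k\|^2+\chi_0(x)$, $\psi_i^k(x)=f_i(x^k)+\langle\nabla f_i(x^k),x-x^k\rangle+\frac{L_i}{2}\|x-x^k\|^2+\chi_i(x)$ ($i\in[m]$), let $x^{k+1}$ minimize $\psi_0^k$ subject to $\psi_i^k(x)\le\eta_i^k$, $i\in[m]$, and set $\eta^{k+1}=\eta^k+\delta^k$ with $\delta^k>0$, $\eta^{k+1}<\eta$. *)

(* Defs.v *)
From HB Require Import structures.
From mathcomp Require Import all_boot all_order all_algebra.
From mathcomp Require Import all_classical all_reals all_analysis.
Set Implicit Arguments. Unset Strict Implicit. Unset Printing Implicit Defensive.
Import Order.TTheory GRing.Theory Num.Theory.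
Import numFieldNormedType.Exports.
Local Open Scope classical_set_scope.
Local Open Scope ring_scope.

Section LCSVRG.
Variables (R : realType) (d : nat).
Local Notation vec := 'rV[R]_d.

Definition dotp (u v : vec) : R := \sum_(i < d) u ord0 i * v ord0 i.
Definition enorm (v : vec) : R := Num.sqrt (dotp v v).
Definition sqnorm (v : vec) : R := dotp v v.

Definition is_gradient (f : vec -> R) (g : vec -> vec) : Prop :=
  forall x, differentiable f x /\ forall v, 'd f x v = dotp (g x) v.

Definition lipschitz_map (L : R) (g : vec -> vec) : Prop :=
  0 <= L /\ forall x y, enorm (g x - g y) <= L * enorm (x - y).

Definition edom (h : vec -> \bar R) : set vec := [set x | h x < +oo]%E.

Definition proper_fun (h : vec -> \bar R) : Prop :=
  (forall x, h x != -oo%E) /\ (exists x, h x < +oo)%E.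

Definition convex_efun (h : vec -> \bar R) : Prop :=
  forall (x y : vec) (t : R), 0 <= t <= 1 ->
    (h (t *: x + (1 - t) *: y)%R <= t%:E * h x + (1 - t)%:E * h y)%E.

Definition convex_set_v (D : set vec) : Prop :=
  forall (x y : vec) (t : R), D x -> D y -> 0 <= t <= 1 -> D (t *: x + (1 - t) *: y).

Definition convex_on (D : set vec) (h : vec -> R) : Prop :=
  forall (x y : vec) (t : R), D x -> D y -> 0 <= t <= 1 ->
    h (t *: x + (1 - t) *: y) <= t * h x + (1 - t) * h y.

(* a mini-batch: b indices drawn (with replacement) from {1..n} *)
Definition batch (n b : nat) := {ffun 'I_b -> 'I_n}.

Variables (n b : nat).

Definition favg (F : 'I_n -> vec -> R) (x : vec) : R :=
  n%:R^-1 * \sum_(j < n) F j x.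
Definition gavg (gF : 'I_n -> vec -> vec) (x : vec) : vec :=
  n%:R^-1 *: \sum_(j < n) gF j x.

(* the SVRG gradient estimator G^k along the sample path w (B_k = w k) *)
Fixpoint svrgG (gF : 'I_n -> vec -> vec) (T : nat) (w : nat -> batch n b)
    (x : nat -> vec) (k : nat) : vec :=
  match k with
  | 0 => gavg gF (x 0%N)
  | k'.+1 =>
      if (T %| k'.+1)%N then gavg gF (x k)
      else b%:R^-1 *: (\sum_(l < b) (gF (w k l) (x k) - gF (w k l) (x k')))
           + svrgG gF T w x k'
  end.

Definition sub_obj (chi0 : vec -> \bar R) (gamma : R) (G xk : vec) (x : vec)
  : \bar R :=
  ((dotp G x + gamma / 2 * sqnorm (x - xk))%:E + chi0 x)%E.

Definition sub_con (f : vec -> R) (g : vec -> vec) (L : R) (chi : vec -> R)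
    (xk x : vec) : R :=
  f xk + dotp (g xk) (x - xk) + L / 2 * sqnorm (x - xk) + chi x.

Variable m : nat.

Definition lcsvrg_run (gF : 'I_n -> vec -> vec) (chi0 : vec -> \bar R)
    (fc : 'I_m -> vec -> R) (gc : 'I_m -> vec -> vec) (Lc : 'I_m -> R)
    (chic : 'I_m -> vec -> R) (gamma : R) (T : nat) (eta : nat -> 'I_m -> R)
    (x0 : vec) (w : nat -> batch n b) (x : nat -> vec) : Prop :=
  x 0%N = x0 /\
  forall k : nat,
    let feas := [set y | forall i, sub_con (fc i) (gc i) (Lc i) (chic i) (x k) y
                                   <= eta k i] in
    feas (x k.+1) /\
    forall y, feas y ->
      (sub_obj chi0 gamma (svrgG gF T w x k) (x k) (x k.+1)
       <= sub_obj chi0 gamma (svrgG gF T w x k) (x k) y)%E.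

Definition ext_path (N : nat) (w0 : batch n b) (s : {ffun 'I_N -> batch n b})
  : nat -> batch n b :=
  fun k => if insub k is Some i then s i else w0.

(* expectation over the first N (i.i.d. uniform) mini-batches *)
Definition Exp (N : nat) (w0 : batch n b) (Z : (nat -> batch n b) -> R) : R :=
  #|{: {ffun 'I_N -> batch n b}}|%:R^-1 *
  \sum_(s : {ffun 'I_N -> batch n b}) Z (ext_path w0 s).

End LCSVRG.

(* Main.v *)
Require Import Defs.
From HB Require Import structures.
From mathcomp Require Import all_boot all_order all_algebra.
From mathcomp Require Import all_classical all_reals all_analysis.
From mathcomp Require Import ring lra.
Import Order.TTheory GRing.Theory Num.Theory.
Import numFieldNormedType.Exports.
Local Open Scope classical_set_scope.
Local Open Scope ring_scope.
Section Dot.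
Context {R : realType} {d : nat}.
Local Notation vec := 'rV[R]_d.
Implicit Types (u v w : vec).

Lemma dotpC u v : dotp u v = dotp v u.
Proof. by apply: eq_bigr => i _; rewrite mulrC. Qed.

Lemma dotpDl u w v : dotp (u + w) v = dotp u v + dotp w v.
Proof. by rewrite /dotp -big_split; apply: eq_bigr => i _; rewrite mxE mulrDl. Qed.

Lemma dotpBl u w v : dotp (u - w) v = dotp u v - dotp w v.
Proof. by rewrite /dotp -sumrB; apply: eq_bigr => i _; rewrite !mxE mulrBl. Qed.

Lemma dotpZl a u v : dotp (a *: u) v = a * dotp u v.
Proof. by rewrite /dotp mulr_sumr; apply: eq_bigr => i _; rewrite mxE mulrA. Qed.

Lemma dotpDr u w v : dotp v (u + w) = dotp v u + dotp v w.
Proof. by rewrite dotpC dotpDl !(dotpC v). Qed.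
Lemma dotpBr u w v : dotp v (u - w) = dotp v u - dotp v w.
Proof. by rewrite dotpC dotpBl !(dotpC v). Qed.
Lemma dotpZr a u v : dotp v (a *: u) = a * dotp v u.
Proof. by rewrite dotpC dotpZl dotpC. Qed.

Lemma dotp0l v : dotp 0 v = 0.
Proof. by rewrite /dotp big1 // => i _; rewrite mxE mul0r. Qed.
Lemma dotp0r v : dotp v 0 = 0.
Proof. by rewrite dotpC dotp0l. Qed.

Lemma dotp_suml (I : Type) (r : seq I) (P : pred I) (f : I -> vec) v :
  dotp (\sum_(i <- r | P i) f i) v = \sum_(i <- r | P i) dotp (f i) v.
Proof.
elim/big_rec2: _ => [|i y1 y2 _ <-]; first by rewrite dotp0l.
by rewrite dotpDl.
Qed.

Lemma dotp_sumr (I : Type) (r : seq I) (P : pred I) (f : I -> vec) v :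
  dotp v (\sum_(i <- r | P i) f i) = \sum_(i <- r | P i) dotp v (f i).
Proof. by rewrite dotpC dotp_suml; apply: eq_bigr => i _; rewrite dotpC. Qed.

Lemma sqnorm_ge0 v : 0 <= sqnorm v.
Proof. by apply: sumr_ge0 => i _; rewrite -expr2 sqr_ge0. Qed.

Lemma sqnorm_eq0 v : sqnorm v = 0 -> v = 0.
Proof.
move=> /eqP; rewrite psumr_eq0; last by move=> i _; rewrite -expr2 sqr_ge0.
move=> /allP H; apply/rowP => i; rewrite mxE.
have := H i (mem_index_enum _); rewrite -expr2 sqrf_eq0 => /eqP ->.
by [].
Qed.

Lemma enorm_sqr v : enorm v ^+ 2 = sqnorm v.
Proof. by rewrite /enorm sqr_sqrtr // sqnorm_ge0. Qed.

Lemma enorm_ge0 v : 0 <= enorm v.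
Proof. exact: sqrtr_ge0. Qed.

Lemma sqnormN v : sqnorm (- v) = sqnorm v.
Proof. by rewrite /sqnorm /dotp; apply: eq_bigr => i _; rewrite mxE mulrNN. Qed.

Lemma sqnormB u v : sqnorm (u - v) = sqnorm (v - u).
Proof. by rewrite -sqnormN opprB. Qed.

Lemma sqnormD u v : sqnorm (u + v) = sqnorm u + 2 * dotp u v + sqnorm v.
Proof.
rewrite /sqnorm dotpDl !dotpDr (dotpC v u); ring.
Qed.

Lemma sqnormBe u v : sqnorm (u - v) = sqnorm u - 2 * dotp u v + sqnorm v.
Proof.
rewrite /sqnorm dotpBl !dotpBr (dotpC v u); ring.
Qed.

Lemma sqnormZ a v : sqnorm (a *: v) = a ^+ 2 * sqnorm v.
Proof. by rewrite /sqnorm dotpZl dotpZr mulrA expr2. Qed.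

Lemma dotp_young (beta : R) u v : 0 < beta ->
  dotp u v <= sqnorm u / (2 * beta) + beta / 2 * sqnorm v.
Proof.
move=> hb.
have := sqnorm_ge0 (u - beta *: v).
rewrite sqnormBe dotpZr sqnormZ => h.
have hb0 : beta != 0 by rewrite gt_eqF.
have e : sqnorm u / (2 * beta) + beta / 2 * sqnorm v - dotp u v
  = (sqnorm u - 2 * (beta * dotp u v) + beta ^+ 2 * sqnorm v) / (2 * beta).
  by field; do ?split; rewrite ?hb0 ?pnatr_eq0 ?mulf_neq0 ?pnatr_eq0.
rewrite -subr_ge0 e divr_ge0 //; apply: mulr_ge0 => //; exact: ltW.
Qed.

Lemma CS u v : dotp u v <= enorm u * enorm v.
Proof.
have [hu|hu] := eqVneq (sqnorm u) 0.
  by rewrite (sqnorm_eq0 _ hu) dotp0l mulr_ge0 // enorm_ge0.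
have hA : 0 < sqnorm u by rewrite lt_neqAle eq_sym hu sqnorm_ge0.
have h := sqnorm_ge0 (dotp u v *: u - sqnorm u *: v).
rewrite sqnormBe !sqnormZ dotpZl dotpZr in h.
have hp : dotp u v ^+ 2 <= sqnorm u * sqnorm v.
  have e : (dotp u v ^+ 2 * sqnorm u - 2 * (dotp u v * (sqnorm u * dotp u v)) +
     sqnorm u ^+ 2 * sqnorm v) = sqnorm u * (sqnorm u * sqnorm v - dotp u v ^+ 2).
    by ring.
  rewrite e pmulr_rge0 // subr_ge0 in h; exact: h.
apply: (le_trans (ler_norm _)).
rewrite /enorm -sqrtrM ?sqnorm_ge0 // -(sqrtr_sqr (dotp u v)).
by rewrite ler_sqrt // mulr_ge0 // sqnorm_ge0.
Qed.

Lemma enormZ a v : enorm (a *: v) = `|a| * enorm v.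
Proof. by rewrite /enorm -/(sqnorm _) sqnormZ sqrtrM ?sqr_ge0 // sqrtr_sqr. Qed.

End Dot.
Section Descent.
Context {R : realType} {d : nat}.
Local Notation vec := 'rV[R]_d.

Lemma line_deriv (f : vec -> R) (g : vec -> vec) (x v : vec) (s : R) :
  is_gradient f g ->
  is_derive s 1 (fun t : R => f (x + t *: v)) (dotp (g (x + s *: v)) v).
Proof.
move=> hg; set a := x + s *: v.
have E : (fun h : R => h^-1 *: (((fun t : R => f (x + t *: v)) \o shift s) (h *: 1)
           - (fun t : R => f (x + t *: v)) s))
       = (fun h : R => h^-1 *: ((f \o shift a) (h *: v) - f a)).
  apply: funext => h /=; congr (_ *: (f _ - _)).
  by rewrite /a /= scalerDl [h *: 1]mulr1 addrCA addrC.
have [df dfv] := hg a.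
apply: DeriveDef.
  by rewrite /derivable E; exact: diff_derivable.
by rewrite /derive E -/(derive f a v) deriveE // dfv.
Qed.

Lemma descent (f : vec -> R) (g : vec -> vec) (L : R) :
  is_gradient f g -> lipschitz_map L g ->
  forall x y, f y <= f x + dotp (g x) (y - x) + L / 2 * sqnorm (y - x).
Proof.
move=> hg [hL0 hL] x y.
set v := y - x; set a := dotp (g x) v; set c := L / 2 * sqnorm v.
pose phi := fun t : R => f (x + t *: v).
pose psi := phi - a \*: (@id R) - c \*: ((@id R) * (@id R)).
have hd : forall s : R, is_derive s 1 psi
    (dotp (g (x + s *: v)) v - a *: (1:R) - c *: (s *: (1:R) + s *: (1:R))).
  move=> s.
  by apply: is_deriveB; first apply: is_deriveB; exact: line_deriv.
have [cc hcc01 hcc] : exists2 cc, cc \in `]0, 1[%R &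
    psi 1 - psi 0 = (dotp (g (x + cc *: v)) v - a *: (1:R)
        - c *: (cc *: (1:R) + cc *: (1:R))) * (1 - 0).
  apply: (@MVT R psi (fun s => dotp (g (x + s *: v)) v - a *: (1:R) - c *: (s *: (1:R) + s *: (1:R))) 0 1) => //. 
  apply: derivable_within_continuous => z hz. 
  by case: (hd z).
rewrite in_itv /= in hcc01; case/andP: hcc01 => hcc0 hcc1.
have sc : forall k s : R, k *: s = k * s by [].
have hle : dotp (g (x + cc *: v)) v - a - c * (cc + cc) <= 0.
  rewrite /a -dotpBl.
  have h1 := CS (g (x + cc *: v) - g x) v.
  have h2 := hL (x + cc *: v) x.
  rewrite addrAC subrr add0r enormZ ger0_norm in h2; last exact: ltW hcc0.
  have h3 : dotp (g (x + cc *: v) - g x) v <= L * cc * sqnorm v.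
    apply: (le_trans h1); rewrite -enorm_sqr expr2 mulrA.
    by apply: ler_wpM2r; [exact: enorm_ge0 | rewrite -mulrA; exact: h2].
  rewrite /c; lra.
have e1 : psi 1 = phi 1 - a * 1 - c * (1 * 1) by [].
have e0 : psi 0 = phi 0 - a * 0 - c * (0 * 0) by [].
rewrite e1 e0 !sc /phi scale1r scale0r addr0 in hcc.
have exy : x + v = y by rewrite /v addrC subrK.
rewrite exy in hcc.
rewrite /c /a in hle hcc *.
lra.
Qed.

End Descent.
Definition updf {I : finType} {J : Type} (s : {ffun I -> J}) (i0 : I) (j : J)
  : {ffun I -> J} := [ffun i => if i == i0 then j else s i].

Lemma updf_id {I : finType} {J : Type} (s : {ffun I -> J}) i0 j :
  updf (updf s i0 j) i0 (s i0) = s.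
Proof. by apply/ffunP => i; rewrite !ffunE; case: eqP => // ->. Qed.

Lemma updf_at {I : finType} {J : Type} (s : {ffun I -> J}) i0 j :
  updf s i0 j i0 = j.
Proof. by rewrite ffunE eqxx. Qed.

Lemma updf_ne {I : finType} {J : Type} (s : {ffun I -> J}) i0 j i :
  i != i0 -> updf s i0 j i = s i.
Proof. by rewrite ffunE => /negbTE ->. Qed.

Section Swap.
Context {R : realType}.

Lemma swap_sum {I J : finType} (i0 : I) (h : {ffun I -> J} -> R) :
  \sum_(s : {ffun I -> J}) \sum_(j : J) h (updf s i0 j)
  = #|J|%:R * \sum_(s : {ffun I -> J}) h s.
Proof.
rewrite pair_big /=.
pose phi := fun p : {ffun I -> J} * J => (updf p.1 i0 p.2, p.1 i0).
have inv : involutive phi.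
  by case=> s j; rewrite /phi /= updf_id updf_at.
rewrite (reindex_inj (inv_inj inv)) /=.
under eq_bigr => p _ do rewrite updf_id.
rewrite -(pair_big xpredT xpredT (fun s (j : J) => h s)) /= mulr_sumr.
by apply: eq_bigr => s _; rewrite sumr_const mulr_natl.
Qed.

End Swap.

Section Batch.
Context {R : realType} {d n b : nat}.
Local Notation vec := 'rV[R]_d.
Hypothesis hn : (0 < n)%N.

Lemma batch_mean1 (l : 'I_b) (h : 'I_n -> R) :
  \sum_(B : batch n b) h (B l) = #|{: batch n b}|%:R / n%:R * \sum_j h j.
Proof.
have hn0 : n%:R != 0 :> R by rewrite pnatr_eq0 -lt0n.
apply: (mulfI hn0).
have -> : n%:R * (#|{: batch n b}|%:R / n%:R * \sum_j h j)
   = #|{: batch n b}|%:R * \sum_j h j :> R by field.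
rewrite {1}(_ : (n%:R : R) = #|'I_n|%:R); last by rewrite card_ord.
rewrite -(swap_sum l (fun B : batch n b => h (B l))).
under eq_bigr => B _ do under eq_bigr => j _ do rewrite updf_at.
by rewrite sumr_const mulr_natl.
Qed.

Lemma batch_cross (l l' : 'I_b) (u : 'I_n -> vec) (a : 'I_n -> vec) :
  l != l' -> \sum_(j < n) u j = 0 ->
  \sum_(B : batch n b) dotp (u (B l)) (a (B l')) = 0.
Proof.
move=> hll hu.
have hn0 : n%:R != 0 :> R by rewrite pnatr_eq0 -lt0n.
apply: (mulfI hn0); rewrite mulr0 {1}(_ : (n%:R : R) = #|'I_n|%:R); last by rewrite card_ord.
rewrite -(swap_sum l (fun B : batch n b => dotp (u (B l)) (a (B l')))).
rewrite big1 // => B _.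
under eq_bigr => j _ do rewrite updf_at updf_ne 1?eq_sym //.
by rewrite -dotp_suml hu dotp0l.
Qed.

Lemma batch_sq (u : 'I_n -> vec) : \sum_(j < n) u j = 0 ->
  n%:R * \sum_(B : batch n b) sqnorm (\sum_(l < b) u (B l))
  = b%:R * #|{: batch n b}|%:R * \sum_(j < n) sqnorm (u j).
Proof.
move=> hu.
have e : forall B : batch n b, sqnorm (\sum_(l < b) u (B l))
    = \sum_(l < b) \sum_(l' < b) dotp (u (B l)) (u (B l')).
  move=> B; rewrite /sqnorm dotp_suml; apply: eq_bigr => l _.
  by rewrite dotp_sumr.
under eq_bigr => B _ do rewrite e.
rewrite exchange_big /=.
have e2 : forall l : 'I_b, \sum_(B : batch n b) \sum_(l' < b) dotp (u (B l)) (u (B l'))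
   = #|{: batch n b}|%:R / n%:R * \sum_j sqnorm (u j).
  move=> l; rewrite exchange_big /= (bigD1 l) //= [X in _ + X]big1 ?addr0.
    exact: (batch_mean1 l (fun j => sqnorm (u j))).
  by move=> l' hl'; apply: batch_cross => //; rewrite eq_sym.
under eq_bigr => l _ do rewrite e2.
rewrite sumr_const card_ord -mulr_natl.
have hn0 : n%:R != 0 :> R by rewrite pnatr_eq0 -lt0n.
by field.
Qed.

End Batch.
Section Batch2.
Context {R : realType} {d n b : nat}.
Local Notation vec := 'rV[R]_d.
Hypothesis hn : (0 < n)%N.
Hypothesis hb : (0 < b)%N.

Lemma card_batch_gt0 : (0 < #|{: batch n b}|)%N.
Proof. by apply/card_gt0P; exists [ffun _ => Ordinal hn]. Qed.

Lemma batch_lin (a : vec) (u : 'I_n -> vec) : \sum_(j < n) u j = 0 ->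
  \sum_(B : batch n b) dotp a (b%:R^-1 *: \sum_(l < b) u (B l)) = 0.
Proof.
move=> hu.
under eq_bigr => B _ do rewrite dotpZr dotp_sumr.
rewrite -mulr_sumr exchange_big /= big1 ?mulr0 // => l _.
rewrite (batch_mean1 hn l (fun j => dotp a (u j))) -dotp_sumr hu dotp0r.
by rewrite mulr0.
Qed.

Lemma batch_sq2 (u : 'I_n -> vec) : \sum_(j < n) u j = 0 ->
  #|{: batch n b}|%:R^-1 * \sum_(B : batch n b) sqnorm (b%:R^-1 *: \sum_(l < b) u (B l))
  = (b%:R * n%:R)^-1 * \sum_(j < n) sqnorm (u j).
Proof.
move=> hu.
have hn0 : n%:R != 0 :> R by rewrite pnatr_eq0 -lt0n.
have hb0 : b%:R != 0 :> R by rewrite pnatr_eq0 -lt0n.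
have hB0 : #|{: batch n b}|%:R != 0 :> R by rewrite pnatr_eq0 -lt0n card_batch_gt0.
under eq_bigr => B _ do rewrite sqnormZ.
rewrite -mulr_sumr.
have h := @batch_sq R d n b hn u hu.
have -> : \sum_(B : batch n b) sqnorm (\sum_(l < b) u (B l))
   = n%:R^-1 * (n%:R * \sum_(B : batch n b) sqnorm (\sum_(l < b) u (B l))).
  by field.
rewrite h; field.
by rewrite hB0 hb0 hn0.
Qed.

End Batch2.

Section ExpL.
Context {R : realType} {n b : nat} (N : nat) (w0 : batch n b).
Implicit Types Z : (nat -> batch n b) -> R.

Lemma Exp_ext Z1 Z2 : (forall w, Z1 w = Z2 w) -> Exp N w0 Z1 = Exp N w0 Z2.
Proof. by move=> h; rewrite /Exp; congr (_ * _); apply: eq_bigr => s _; exact: h. Qed.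

Lemma ExpD Z1 Z2 : Exp N w0 (fun w => Z1 w + Z2 w) = Exp N w0 Z1 + Exp N w0 Z2.
Proof. by rewrite /Exp big_split mulrDr. Qed.

Lemma ExpB Z1 Z2 : Exp N w0 (fun w => Z1 w - Z2 w) = Exp N w0 Z1 - Exp N w0 Z2.
Proof. by rewrite /Exp sumrB mulrBr. Qed.

Lemma ExpZ c Z : Exp N w0 (fun w => c * Z w) = c * Exp N w0 Z.
Proof. by rewrite /Exp -mulr_sumr mulrCA. Qed.

Lemma Exp_sum k (Z : 'I_k -> (nat -> batch n b) -> R) :
  Exp N w0 (fun w => \sum_(j < k) Z j w) = \sum_(j < k) Exp N w0 (Z j).
Proof. by rewrite /Exp exchange_big /= mulr_sumr. Qed.

Lemma Exp_le Z1 Z2 : (forall w, Z1 w <= Z2 w) -> Exp N w0 Z1 <= Exp N w0 Z2.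
Proof.
move=> h; rewrite /Exp; apply: ler_wpM2l; first by rewrite invr_ge0 ler0n.
by apply: ler_sum => s _.
Qed.

Lemma Exp0 : Exp N w0 (fun _ => 0 : R) = 0.
Proof. by rewrite /Exp big1 ?mulr0. Qed.

Lemma Exp_ge0 Z : (forall w, 0 <= Z w) -> 0 <= Exp N w0 Z.
Proof. by move=> h; rewrite -Exp0; apply: Exp_le. Qed.

Hypothesis hn : (0 < n)%N.

Lemma Exp_swap k Z : (k < N)%N ->
  Exp N w0 Z = Exp N w0 (fun w => #|{: batch n b}|%:R^-1 *
     \sum_(B : batch n b) Z (fun i => if i == k then B else w i)).
Proof.
move=> hk; rewrite /Exp; congr (_ * _).
have hB0 : #|{: batch n b}|%:R != 0 :> R.
  by rewrite pnatr_eq0 -lt0n card_batch_gt0.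
pose k' := Ordinal hk.
have e : forall s B, (fun i => if i == k then B else ext_path w0 s i)
                    = ext_path w0 (updf s k' B).
  move=> s B; apply: funext => i; rewrite /ext_path.
  case: insubP => [j hj ej|hi].
    rewrite ffunE; have -> : (j == k') = (i == k) by rewrite -val_eqE /= ej.
    by [].
  have -> : (i == k) = false.
    by apply/negbTE; apply: contra hi => /eqP ->.
  by [].
under [RHS]eq_bigr => s _ do under eq_bigr => B _ do rewrite e.
rewrite -mulr_sumr (swap_sum k' (fun s => Z (ext_path w0 s))).
by rewrite mulKf.
Qed.

End ExpL.
Lemma lim0 {R : realType} (a c : R) : 0 <= c ->
  (forall t, 0 < t <= 1 -> 0 <= a - c * (1 - t)) -> 0 <= a - c.
Proof.
move=> hc H.
have ha : 0 <= a by have := H 1; rewrite lexx ltr01 subrr mulr0 subr0; apply.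
rewrite leNgt; apply/negP => hac.
have hc0 : 0 < c by lra.
pose t := (c - a) / (2 * c).
have ht0 : 0 < t by rewrite /t divr_gt0 //; lra.
have ht1 : t <= 1.
  rewrite /t ler_pdivrMr; last lra.
  lra.
have := H t; rewrite ht0 ht1 => /(_ isT).
have -> : a - c * (1 - t) = (a - c) / 2.
  by rewrite /t; field; rewrite gt_eqF.
rewrite pmulr_lge0; last by rewrite invr_gt0 ltr0n.
lra.
Qed.

Lemma fin_le {R : realType} (e : \bar R) (r : R) :
  e != -oo%E -> (e <= r%:E)%E -> e = (fine e)%:E /\ fine e <= r.
Proof.
case: e => [s| |] // _ h.
Qed.

Lemma conv_sub {R : realType} {d : nat} (t : R) (y x k : 'rV[R]_d) :
  t *: y + (1 - t) *: x - k = t *: (y - k) + (1 - t) *: (x - k).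
Proof.
have hk : t *: k + (1 - t) *: k = k by rewrite -scalerDl addrC subrK scale1r.
by rewrite !scalerBr addrACA -opprD hk.
Qed.

Lemma sq_conv {R : realType} {d : nat} (t : R) (p q : 'rV[R]_d) :
  sqnorm (t *: p + (1 - t) *: q)
  = t * sqnorm p + (1 - t) * sqnorm q - t * (1 - t) * sqnorm (p - q).
Proof.
rewrite (sqnormD (t *: p)) !sqnormZ (sqnormBe p) dotpZl dotpZr; ring.
Qed.

Lemma tele_alg {R : realType} (c ib A B a e P0 P1 P2 : R) :
  c * A - ib * B <= P0 - P1 -> P2 <= P1 - c * a + ib * e ->
  c * (A + a) - ib * (B + e) <= P0 - P2.
Proof. lra. Qed.

Lemma dsum {R : realType} (a : nat -> R) t : (forall i, 0 <= a i) ->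
  \sum_(j < t.+1) \sum_(i < j) a i <= t%:R * \sum_(i < t.+1) a i.
Proof.
move=> ha; elim: t => [|t IH].
  by rewrite big_ord1 big_ord0 mul0r.
rewrite big_ord_recr /=.
have hs : 0 <= \sum_(i < t.+1) a i by apply: sumr_ge0.
rewrite [X in _ <= _ * X]big_ord_recr /= -natr1 mulrDl mul1r.
apply: lerD.
  apply: (le_trans IH); apply: ler_wpM2l; first exact: ler0n.
  by rewrite lerDl.
by rewrite lerDl.
Qed.

Section Main1.
Context {R : realType} {d n b m : nat}.
Local Notation vec := 'rV[R]_d.
Variable (T : nat).
Variables (F : 'I_n -> vec -> R) (gF : 'I_n -> vec -> vec) (L0 : R).
Hypothesis hF : forall j, is_gradient (F j) (gF j).
Hypothesis hL0 : forall j, lipschitz_map L0 (gF j).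
Variable chi0 : vec -> \bar R.
Hypothesis hchi0p : proper_fun chi0.
Hypothesis hchi0c : convex_efun chi0.
Variables (fc : 'I_m -> vec -> R) (gc : 'I_m -> vec -> vec)
  (Lc : 'I_m -> R) (chic : 'I_m -> vec -> R).
Hypothesis hfc : forall i, is_gradient (fc i) (gc i).
Hypothesis hLc : forall i, lipschitz_map (Lc i) (gc i).
Hypothesis hchic : forall i, convex_on (edom chi0) (chic i).
Variables (gamma : R) (x0 : vec) (eta : nat -> 'I_m -> R) (etabar : 'I_m -> R).
Hypothesis hgamma : 0 < gamma.

Definition feasS (k : nat) (xk : vec) : set vec :=
  [set y | forall i, sub_con (fc i) (gc i) (Lc i) (chic i) xk y <= eta k i].

Lemma dom_fin {y} : edom chi0 y -> chi0 y = (fine (chi0 y))%:E.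
Proof.
rewrite /edom /= => hy; have hn := hchi0p.1 y.
by move: hy hn; case: (chi0 y).
Qed.

Lemma dom_conv y1 y2 t : edom chi0 y1 -> edom chi0 y2 -> 0 <= t <= 1 ->
  edom chi0 (t *: y1 + (1 - t) *: y2) /\
  fine (chi0 (t *: y1 + (1 - t) *: y2)) <= t * fine (chi0 y1) + (1 - t) * fine (chi0 y2).
Proof.
move=> h1 h2 ht.
have := hchi0c y1 y2 t ht; rewrite (dom_fin h1) (dom_fin h2) -!EFinM -EFinD => hle.
have [e he] := fin_le _ _ (hchi0p.1 _) hle.
split => //; rewrite /edom /= e; exact: ltry.
Qed.

Lemma feas_conv k xk y1 y2 t : feasS k xk y1 -> feasS k xk y2 ->
  edom chi0 y1 -> edom chi0 y2 -> 0 <= t <= 1 ->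
  feasS k xk (t *: y1 + (1 - t) *: y2).
Proof.
move=> f1 f2 d1 d2 ht i.
have hc := hchic i y1 y2 t d1 d2 ht.
have [hL _] := hLc i.
have e1 := f1 i; have e2 := f2 i.
rewrite /sub_con in e1 e2 *.
rewrite conv_sub dotpDr !dotpZr sq_conv.
have hD := sqnorm_ge0 ((y1 - xk) - (y2 - xk)).
move/andP: ht => [t0 t1].
have hp : 0 <= Lc i / 2 * (t * (1 - t) * sqnorm ((y1 - xk) - (y2 - xk))).
  apply: mulr_ge0; first by apply: divr_ge0.
  by apply: mulr_ge0 => //; apply: mulr_ge0 => //; lra.
have h3 : eta k i = t * eta k i + (1 - t) * eta k i by ring.
have h4 : t * sub_con (fc i) (gc i) (Lc i) (chic i) xk y1 <= t * eta k i.
  by apply: ler_wpM2l.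
have h5 : (1 - t) * sub_con (fc i) (gc i) (Lc i) (chic i) xk y2 <= (1 - t) * eta k i.
  by apply: ler_wpM2l => //; lra.
rewrite /sub_con in h4 h5.
nra.
Qed.

Lemma strong_min k xk G xp y :
  (forall z, feasS k xk z ->
     (sub_obj chi0 gamma G xk xp <= sub_obj chi0 gamma G xk z)%E) ->
  feasS k xk xp -> feasS k xk y -> edom chi0 y ->
  edom chi0 xp /\
  dotp G xp + gamma / 2 * sqnorm (xp - xk) + fine (chi0 xp)
     + gamma / 2 * sqnorm (y - xp)
  <= dotp G y + gamma / 2 * sqnorm (y - xk) + fine (chi0 y).
Proof.
move=> hmin fxp fy dy.
have dxp : edom chi0 xp.
  have := hmin y fy; rewrite /sub_obj (dom_fin dy) -EFinD /edom /=.
  have := hchi0p.1 xp.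
  by case: (chi0 xp) => [s| |] //= _ h; exact: ltry.
split => //.
set P := sqnorm (y - xk); set Q := sqnorm (xp - xk); set D := sqnorm (y - xp).
set cy := fine (chi0 y); set cx := fine (chi0 xp).
suff : 0 <= (dotp G y + gamma / 2 * P + cy - (dotp G xp + gamma / 2 * Q + cx))
            - gamma / 2 * D by lra.
apply: lim0.
  by apply: mulr_ge0; [apply: divr_ge0; [exact: ltW|] | exact: sqnorm_ge0].
move=> t /andP[t0 t1].
have ht : 0 <= t <= 1 by rewrite ltW.
have [dz hz] := dom_conv _ _ _ dy dxp ht.
have fz := feas_conv _ _ _ _ _ fy fxp dy dxp ht.
have := hmin _ fz; rewrite /sub_obj (dom_fin dxp) (dom_fin dz) -!EFinD lee_fin.
rewrite conv_sub sq_conv dotpDr !dotpZr.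
have -> : (y - xk) - (xp - xk) = y - xp by rewrite opprB addrA subrK.
rewrite -/P -/Q -/D -/cx => h.
have hg : 0 <= gamma by exact: ltW.
have : 0 <= t * ((dotp G y + gamma / 2 * P + cy - (dotp G xp + gamma / 2 * Q + cx))
            - gamma / 2 * D * (1 - t)).
  move: hz; rewrite -/cy -/cx; move=> hz.
  lra.
by rewrite pmulr_rge0.
Qed.

Lemma feas_self k xk : (forall i, fc i xk + chic i xk <= eta k i) -> feasS k xk xk.
Proof.
move=> h i; rewrite /sub_con subrr dotp0r /sqnorm dotp0r mulr0 !addr0; exact: h.
Qed.

Lemma svrg_causal k : forall (w w' : nat -> batch n b) (x x' : nat -> vec),
  (forall i, (i <= k)%N -> w i = w' i) -> (forall i, (i <= k)%N -> x i = x' i) ->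
  svrgG gF T w x k = svrgG gF T w' x' k.
Proof.
elim: k => [|k IH] w w' x x' hw hx /=; first by rewrite hx.
rewrite hw // hx // hx ?leqnSn // (IH w w' x x') //.
- by move=> i hi; apply: hw; exact: leqW.
- by move=> i hi; apply: hx; exact: leqW.
Qed.

Variable X : (nat -> batch n b) -> nat -> vec.
Hypothesis hX : forall w, lcsvrg_run gF chi0 fc gc Lc chic gamma T eta x0 w (X w).
Hypothesis hx0 : edom chi0 x0.
Hypothesis heta0 : forall i, fc i x0 + chic i x0 < eta 0%N i /\ eta 0%N i < etabar i.
Hypothesis heta : forall k i, eta k i < eta k.+1 i.

Lemma run_feas w k : feasS k (X w k) (X w k.+1).
Proof. exact: ((hX w).2 k).1. Qed.

Lemma run_min w k z : feasS k (X w k) z ->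
  (sub_obj chi0 gamma (svrgG gF T w (X w) k) (X w k) (X w k.+1)
   <= sub_obj chi0 gamma (svrgG gF T w (X w) k) (X w k) z)%E.
Proof. exact: ((hX w).2 k).2. Qed.

Lemma dom_feas w k : edom chi0 (X w k) /\ forall i, fc i (X w k) + chic i (X w k) <= eta k i.
Proof.
elim: k => [|k [dk fk]].
  rewrite (hX w).1; split => // i; exact: ltW (heta0 i).1.
have fs := feas_self _ _ fk.
have [dxp _] := strong_min _ _ _ _ _ (run_min w k) (run_feas w k) fs dk.
split => // i.
have := run_feas w k i; rewrite /sub_con.
have := descent _ _ _ (hfc i) (hLc i) (X w k) (X w k.+1).
have := heta k i.
lra.
Qed.

Lemma X_causal j : forall w w', (forall i, (i < j)%N -> w i = w' i) ->
  forall i, (i <= j)%N -> X w i = X w' i.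
Proof.
elim: j => [|j IH] w w' hw i.
  by rewrite leqn0 => /eqP ->; rewrite (hX w).1 (hX w').1.
have IH' := IH w w' (fun i hi => hw i (leqW hi)).
rewrite leq_eqVlt => /orP[/eqP ->| hi]; last exact: IH'.
have eG : svrgG gF T w' (X w') j = svrgG gF T w (X w) j.
  apply: svrg_causal => i0 hi0; first by rewrite hw.
  by rewrite IH'.
have ex : X w' j = X w j by rewrite IH'.
have m1 := run_min w j; have f1 := run_feas w j.
have m2 := run_min w' j; have f2 := run_feas w' j.
rewrite eG ex in m2 f2.
have [d1 _] := dom_feas w j.+1; have [d2 _] := dom_feas w' j.+1.
have [_ h1] := strong_min _ _ _ _ _ m1 f1 f2 d2.
have [_ h2] := strong_min _ _ _ _ _ m2 f2 f1 d1.
rewrite (sqnormB (X w' j.+1) (X w j.+1)) in h1.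
have hs := sqnorm_ge0 (X w j.+1 - X w' j.+1).
have h0 : sqnorm (X w j.+1 - X w' j.+1) = 0.
  apply/eqP; rewrite eq_le hs andbT.
  have : gamma * sqnorm (X w j.+1 - X w' j.+1) <= 0 by lra.
  by rewrite pmulr_rle0.
by apply/eqP; rewrite -subr_eq0; apply/eqP; exact: sqnorm_eq0.
Qed.

Hypothesis hn : (0 < n)%N.
Hypothesis hb : (0 < b)%N.
Variable beta : R.
Hypothesis hbeta : 0 < beta.

Lemma favg_descent x y : favg F y <= favg F x + dotp (gavg gF x) (y - x)
   + L0 / 2 * sqnorm (y - x).
Proof.
have hn0 : n%:R != 0 :> R by rewrite pnatr_eq0 -lt0n.
rewrite /favg /gavg dotpZl dotp_suml.
have h : \sum_(j < n) F j y <= \sum_(j < n) (F j x + dotp (gF j x) (y - x)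
   + L0 / 2 * sqnorm (y - x)).
  by apply: ler_sum => j _; exact: (descent _ _ _ (hF j) (hL0 j) x y).
rewrite !big_split /= sumr_const card_ord in h.
have e : n%:R^-1 * (L0 / 2 * sqnorm (y - x) *+ n) = L0 / 2 * sqnorm (y - x).
  by rewrite -[X in _ * X]mulr_natr; field.
rewrite -e -!mulrDr; apply: ler_wpM2l => //.
Qed.

Definition psiR (y : vec) := favg F y + fine (chi0 y).

Lemma step w k : psiR (X w k.+1) <= psiR (X w k)
  - (gamma - L0 / 2 - beta / 2) * sqnorm (X w k.+1 - X w k)
  + sqnorm (gavg gF (X w k) - svrgG gF T w (X w) k) / (2 * beta).
Proof.
have [dk fk] := dom_feas w k.
have fs := feas_self _ _ fk.
have [_ h] := strong_min _ _ _ _ _ (run_min w k) (run_feas w k) fs dk.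
rewrite subrr /sqnorm dotp0r mulr0 addr0 -/(sqnorm _) in h.
rewrite -/(sqnorm (X w k - X w k.+1)) (sqnormB (X w k)) in h.
have fd := favg_descent (X w k) (X w k.+1).
have y := dotp_young beta (gavg gF (X w k) - svrgG gF T w (X w) k)
   (X w k.+1 - X w k) hbeta.
rewrite dotpBl !dotpBr in y.
rewrite dotpBr in fd.
rewrite /psiR.
lra.
Qed.

Definition ev w k := gavg gF (X w k) - svrgG gF T w (X w) k.

Lemma ev_epoch w r : ev w (r * T)%N = 0.
Proof.
rewrite /ev; case E: (r * T)%N => [|k] /=; first by rewrite subrr.
have hd : (T %| k.+1)%N by rewrite -E dvdn_mull.
by rewrite hd subrr.
Qed.

Definition uvec w k (i : 'I_n) : vec :=
  (gavg gF (X w k.+1) - gavg gF (X w k)) - (gF i (X w k.+1) - gF i (X w k)).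

Lemma ev_step w k : ~~ (T %| k.+1)%N ->
  ev w k.+1 = ev w k + b%:R^-1 *: \sum_(l < b) uvec w k (w k.+1 l).
Proof.
move=> hT; rewrite /ev /= (negbTE hT) /uvec.
have hb0 : b%:R != 0 :> R by rewrite pnatr_eq0 -lt0n.
rewrite [in RHS]sumrB [in RHS]sumr_const card_ord.
rewrite scalerBr -(scaler_nat b (gavg gF (X w k.+1) - gavg gF (X w k))) scalerA mulVf // scale1r.
set S := b%:R^-1 *: _.
by apply/rowP => i; rewrite !mxE; ring.
Qed.

Lemma uvec_sum w k : \sum_(i < n) uvec w k i = 0.
Proof.
have hn0 : n%:R != 0 :> R by rewrite pnatr_eq0 -lt0n.
rewrite /uvec sumrB sumr_const card_ord /gavg -scalerBr -sumrB.
rewrite -scaler_nat scalerA mulfV // scale1r subrr.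
by [].
Qed.

Lemma uvec_sq w k : \sum_(i < n) sqnorm (uvec w k i)
  <= n%:R * (L0 ^+ 2 * sqnorm (X w k.+1 - X w k)).
Proof.
set z := fun i : 'I_n => gF i (X w k.+1) - gF i (X w k).
set M := gavg gF (X w k.+1) - gavg gF (X w k).
have hn0 : n%:R != 0 :> R by rewrite pnatr_eq0 -lt0n.
have hz : \sum_(i < n) z i = n%:R *: M.
  rewrite /M /gavg -scalerBr -sumrB scalerA mulfV // scale1r.
  by [].
have e : \sum_(i < n) sqnorm (uvec w k i)
   = n%:R * sqnorm M - 2 * dotp M (\sum_(i < n) z i) + \sum_(i < n) sqnorm (z i).
  rewrite (eq_bigr (fun i => sqnorm M - 2 * dotp M (z i) + sqnorm (z i))); last first.
    by move=> i _; rewrite /uvec -/M -/(z i) sqnormBe.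
  rewrite big_split sumrB /= sumr_const card_ord -mulr_sumr -dotp_sumr.
  by rewrite (mulr_natl (sqnorm M)).
rewrite e hz dotpZr.
have hM := sqnorm_ge0 M.
have hzi : \sum_(i < n) sqnorm (z i) <= \sum_(i < n) (L0 ^+ 2 * sqnorm (X w k.+1 - X w k)).
  apply: ler_sum => i _.
  have [hL hl] := hL0 i.
  have h := hl (X w k.+1) (X w k).
  rewrite -!enorm_sqr -exprMn; apply: lerXn2r => //.
    exact: enorm_ge0.
  by apply: mulr_ge0 => //; exact: enorm_ge0.
rewrite sumr_const card_ord -mulr_natl in hzi.
have hn' : 0 <= n%:R :> R by exact: ler0n.
rewrite -/(sqnorm M).
nra.
Qed.

Definition updw (w : nat -> batch n b) k (B : batch n b) :=
  fun i => if i == k then B else w i.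

Lemma X_upd w k B i : (i <= k.+1)%N -> X (updw w k.+1 B) i = X w i.
Proof.
move=> hi; apply: (X_causal k.+1) => // j hj.
by rewrite /updw (ltn_eqF hj).
Qed.

Lemma ev_upd w k B : ev (updw w k.+1 B) k = ev w k.
Proof.
rewrite /ev X_upd //; congr (_ - _).
apply: svrg_causal => i hi.
  by rewrite /updw (ltn_eqF (leq_ltn_trans hi (ltnSn k))).
by rewrite X_upd // leqW.
Qed.

Lemma uvec_upd w k B j : uvec (updw w k.+1 B) k j = uvec w k j.
Proof. by rewrite /uvec !X_upd. Qed.

Variables (N : nat) (w0 : batch n b).

Lemma var_step k : (k.+1 < N)%N -> ~~ (T %| k.+1)%N ->
  Exp N w0 (fun w => sqnorm (ev w k.+1))
  <= Exp N w0 (fun w => sqnorm (ev w k))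
     + L0 ^+ 2 / b%:R * Exp N w0 (fun w => sqnorm (X w k.+1 - X w k)).
Proof.
move=> hk hT.
pose v w := b%:R^-1 *: \sum_(l < b) uvec w k (w k.+1 l).
rewrite (Exp_ext N w0 (fun w => sqnorm (ev w k.+1)) (fun w => sqnorm (ev w k) + 2 * dotp (ev w k) (v w)
   + sqnorm (v w))); last by move=> w; rewrite ev_step // sqnormD.
rewrite !ExpD ExpZ.
have h0 : Exp N w0 (fun w => dotp (ev w k) (v w)) = 0.
  rewrite (Exp_swap N w0 hn k.+1) //.
  rewrite (Exp_ext N w0 _ (fun _ => 0 : R)); first exact: Exp0.
  move=> w.
  have e : forall B, dotp (ev (updw w k.+1 B) k) (v (updw w k.+1 B))
     = dotp (ev w k) (b%:R^-1 *: \sum_(l < b) uvec w k (B l)).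
    move=> B; rewrite ev_upd /v; congr (dotp _ (_ *: _)).
    by apply: eq_bigr => l _; rewrite uvec_upd /updw eqxx.
  rewrite -/(updw w k.+1 _).
  under eq_bigr => B _ do rewrite e.
  by rewrite (batch_lin hn _ _) ?mulr0 // uvec_sum.
have h1 : Exp N w0 (fun w => sqnorm (v w))
    <= L0 ^+ 2 / b%:R * Exp N w0 (fun w => sqnorm (X w k.+1 - X w k)).
  rewrite (Exp_swap N w0 hn k.+1) // -ExpZ; apply: Exp_le => w.
  have e : forall B, sqnorm (v (updw w k.+1 B))
     = sqnorm (b%:R^-1 *: \sum_(l < b) uvec w k (B l)).
    move=> B; rewrite /v; congr (sqnorm (_ *: _)).
    by apply: eq_bigr => l _; rewrite uvec_upd /updw eqxx.
  rewrite -/(updw w k.+1 _).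
  under eq_bigr => B _ do rewrite e.
  rewrite (batch_sq2 hn hb _) ?uvec_sum //.
  have hq := uvec_sq w k.
  have hn0 : 0 < n%:R :> R by rewrite ltr0n.
  have hb0 : 0 < b%:R :> R by rewrite ltr0n.
  have hp : 0 <= (b%:R * n%:R)^-1 :> R by rewrite invr_ge0 mulr_ge0 ?ler0n.
  apply: (le_trans (ler_wpM2l hp hq)); rewrite le_eqVlt; apply/orP; left.
  apply/eqP; field.
  by rewrite !gt_eqF.
rewrite h0 mulr0 addr0; lra.
Qed.

Lemma var_bound r t j : (j <= t)%N -> (t < T)%N -> (r * T + t < N)%N ->
  Exp N w0 (fun w => sqnorm (ev w (r * T + j)%N))
  <= L0 ^+ 2 / b%:R * \sum_(i < j) Exp N w0
        (fun w => sqnorm (X w (r * T + i).+1 - X w (r * T + i)%N)).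
Proof.
move=> hjt htT hN; elim: j hjt => [|j IH] hj.
  rewrite big_ord0 mulr0 addn0.
  rewrite (Exp_ext N w0 _ (fun _ => 0 : R)) ?Exp0 // => w.
  by rewrite ev_epoch /sqnorm dotp0l.
have hj' : (j <= t)%N by exact: ltnW.
have := var_step (r * T + j)%N.
rewrite -addnS.
have hk : (r * T + j.+1 < N)%N by apply: leq_ltn_trans hN; rewrite leq_add2l.
have hd : ~~ (T %| r * T + j.+1)%N.
  rewrite dvdn_addr ?dvdn_mull //.
  apply/negP => /dvdn_leq => /(_ isT) hle.
  have : (j.+1 < T)%N by apply: leq_ltn_trans htT.
  by rewrite ltnNge hle.
move=> /(_ hk hd) h.
apply: (le_trans h).
rewrite big_ord_recr /= mulrDr addnS.
by apply: lerD => //; apply: IH.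
Qed.

Lemma tele w r t :
  (gamma - L0 / 2 - beta / 2) * \sum_(j < t.+1) sqnorm (X w (r * T + j).+1 - X w (r * T + j)%N)
  - (2 * beta)^-1 * \sum_(j < t.+1) sqnorm (ev w (r * T + j)%N)
  <= psiR (X w (r * T)%N) - psiR (X w (r * T + t).+1).
Proof.
elim: t => [|t IH].
  rewrite !big_ord1 addn0.
  have := step w (r * T)%N; rewrite /ev [_ / (2 * beta)]mulrC; move: ((2 * beta)^-1) => ib.
  set P0 := psiR (X w (r * T)%N). set P1 := psiR (X w (r * T).+1). set S := sqnorm (X w _ - _). set E := sqnorm (gavg _ _ - _). set c := (gamma - L0 / 2 - beta / 2).
  move=> h; have e : P0 - P1 - (c * S - ib * E) = P0 - c * S + ib * E - P1 by ring.
  by rewrite -subr_ge0 e subr_ge0.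
rewrite big_ord_recr /= [X in _ - _ * X]big_ord_recr /=.
have := step w (r * T + t.+1)%N; rewrite [_ / (2 * beta)]mulrC => h.
rewrite -addnS in IH.
move: IH h.
set A := \sum_(i < t.+1) _. set B := \sum_(i < t.+1) _.
set P0 := psiR _. set P1 := psiR (X w (r * T + t.+1)%N).
set P2 := psiR _. set a := sqnorm (X w _ - _). set e := sqnorm (gavg _ _ - _).
set c := (gamma - L0 / 2 - beta / 2). set ib := (2 * beta)^-1.
move=> h1 h2.
have key : P0 - P2 - (c * (A + a) - ib * (B + e))
   = (P0 - P1 - (c * A - ib * B)) + (P1 - c * a + ib * e - P2) by ring.
by rewrite -subr_ge0 key addr_ge0 // subr_ge0.
Qed.

Lemma main_sec r t : (t < T)%N -> N = (r * T + t + 1)%N ->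
  ((2 * gamma - beta - L0) / 2 - L0 ^+ 2 * (T - 1)%:R / (2 * beta * b%:R))
  * \sum_(j < t.+1) Exp N w0 (fun w => sqnorm (X w (r * T + j).+1 - X w (r * T + j)%N))
  <= Exp N w0 (fun w => psiR (X w (r * T)%N))
     - Exp N w0 (fun w => psiR (X w (r * T + t).+1)).
Proof.
move=> htT hN.
set S := \sum_(j < t.+1) _.
set V := \sum_(j < t.+1) Exp N w0 (fun w => sqnorm (ev w (r * T + j)%N)).
set c1 := gamma - L0 / 2 - beta / 2.
set q := L0 ^+ 2 / b%:R.
have hq : 0 <= q by rewrite /q divr_ge0 ?ler0n ?sqr_ge0.
have hS : 0 <= S.
  by apply: sumr_ge0 => j _; apply: Exp_ge0 => w; exact: sqnorm_ge0.
have h1 : c1 * S - (2 * beta)^-1 * V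
   <= Exp N w0 (fun w => psiR (X w (r * T)%N))
     - Exp N w0 (fun w => psiR (X w (r * T + t).+1)).
  have h := Exp_le N w0 _ _ (fun w => tele w r t).
  rewrite (ExpB N w0 (fun w => (gamma - L0 / 2 - beta / 2) * \sum_(j < t.+1)
     sqnorm (X w (r * T + j).+1 - X w (r * T + j)%N))
     (fun w => (2 * beta)^-1 * \sum_(j < t.+1) sqnorm (ev w (r * T + j)%N))) in h.
  rewrite !ExpZ !Exp_sum ExpB in h.
  exact: h.
have hNt : (r * T + t < N)%N by rewrite hN addn1.
have h2 : V <= q * (t%:R * S).
  apply: (le_trans (y := q * \sum_(j < t.+1) \sum_(i < j) Exp N w0
        (fun w => sqnorm (X w (r * T + i).+1 - X w (r * T + i)%N)))).
    rewrite mulr_sumr; apply: ler_sum => j _.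
    by apply: (var_bound r t j) => //; rewrite -ltnS.
  apply: ler_wpM2l => //.
  apply: (dsum (fun i => Exp N w0
        (fun w => sqnorm (X w (r * T + i).+1 - X w (r * T + i)%N)))).
  by move=> i; apply: Exp_ge0 => w; exact: sqnorm_ge0.
have h3 : q * (t%:R * S) <= q * ((T - 1)%:R * S).
  apply: (ler_wpM2l hq); apply: (ler_wpM2r hS).
  rewrite ler_nat leq_subRL ?add1n //.
  exact: leq_ltn_trans (leq0n t) htT.
have hib : 0 <= (2 * beta)^-1 by rewrite invr_ge0 mulr_ge0 // ltW.
have h4 : (2 * beta)^-1 * V <= (2 * beta)^-1 * (q * ((T - 1)%:R * S)).
  by apply: ler_wpM2l => //; exact: le_trans h2 h3.
have e : ((2 * gamma - beta - L0) / 2 - L0 ^+ 2 * (T - 1)%:R / (2 * beta * b%:R)) * S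
   = c1 * S - (2 * beta)^-1 * (q * ((T - 1)%:R * S)).
  rewrite /c1 /q; field.
  by rewrite !gt_eqF // ltr0n.
rewrite e; apply: le_trans h1.
by rewrite lerB.
Qed.

End Main1.
Theorem mainTheorem14 (R : realType) (d n b m T : nat)
  (hn : (0 < n)%N) (hb : (0 < b)%N) (hT : (0 < T)%N)
  (* finite-sum objective f_0 = (1/n) sum_j F(., xi_j) *)
  (F : 'I_n -> 'rV[R]_d -> R) (gF : 'I_n -> 'rV[R]_d -> 'rV[R]_d) (L0 : R)
  (hF : forall j, is_gradient (F j) (gF j))
  (hL0 : forall j, lipschitz_map L0 (gF j))
  (* chi_0 proper convex lsc *)
  (chi0 : 'rV[R]_d -> \bar R)
  (hchi0p : proper_fun chi0) (hchi0c : convex_efun chi0)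
  (hchi0l : lower_semicontinuous chi0)
  (* constraints psi_i = f_i + chi_i <= etabar_i *)
  (fc : 'I_m -> 'rV[R]_d -> R) (gc : 'I_m -> 'rV[R]_d -> 'rV[R]_d)
  (Lc : 'I_m -> R) (chic : 'I_m -> 'rV[R]_d -> R) (etabar : 'I_m -> R)
  (hfc : forall i, is_gradient (fc i) (gc i))
  (hLc : forall i, lipschitz_map (Lc i) (gc i))
  (hchic : forall i, convex_on (edom chi0) (chic i) /\
                     {within edom chi0, continuous (chic i)})
  (hfeas : let Feas := [set x | edom chi0 x /\
                          forall i, fc i x + chic i x <= etabar i] in
           Feas !=set0 /\ compact Feas /\
           exists lb : R, forall x, Feas x ->
             (lb%:E <= (favg F x)%:E + chi0 x)%E)
  (* algorithm parameters *)
  (gamma : R) (hgamma : 0 < gamma)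
  (x0 : 'rV[R]_d) (hx0 : edom chi0 x0)
  (eta : nat -> 'I_m -> R)
  (heta0 : forall i, fc i x0 + chic i x0 < eta 0%N i /\ eta 0%N i < etabar i)
  (heta : forall k i, eta k i < eta k.+1 i /\ eta k.+1 i < etabar i)
  (* the iterates, as functions of the sample path of mini-batches *)
  (X : (nat -> batch n b) -> nat -> 'rV[R]_d)
  (hX : forall w, lcsvrg_run gF chi0 fc gc Lc chic gamma T eta x0 w (X w))
  (beta : R) (hbeta : 0 < beta < 2 * gamma - L0)
  (hLt : 0 < (2 * gamma - beta - L0) / 2
             - L0 ^+ 2 * (T - 1)%:R / (2 * beta * b%:R))
  (w0 : batch n b) (r t : nat) (ht : (t < T)%N) :
  let Lt := (2 * gamma - beta - L0) / 2
            - L0 ^+ 2 * (T - 1)%:R / (2 * beta * b%:R) in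
  let N := (r * T + t + 1)%N in
  let psi0 := fun x => fine ((favg F x)%:E + chi0 x)%E in
  Lt * (\sum_(j < t.+1)
          Exp N w0 (fun w => sqnorm (X w (r * T + j.+1)%N - X w (r * T + j)%N)))
  <= Exp N w0 (fun w => psi0 (X w (r * T)%N))
     - Exp N w0 (fun w => psi0 (X w (r * T + t.+1)%N)).
Proof.
cbv beta zeta.
set N := (r * T + t + 1)%N.
have hbeta0 : 0 < beta by case/andP: hbeta.
have hdom : forall w k, edom chi0 (X w k).
  move=> w k.
  exact: (dom_feas T gF chi0 hchi0p hchi0c fc gc Lc chic hfc hLc
    (fun i => (hchic i).1) gamma x0 eta etabar hgamma X hX hx0 heta0
    (fun k i => (heta k i).1) w k).1.
have hpsi : forall w k, fine ((favg F (X w k))%:E + chi0 (X w k))%E = psiR F chi0 (X w k).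
  move=> w k; rewrite /psiR.
  have := hdom w k; rewrite /edom /=; have := hchi0p.1 (X w k).
  by case: (chi0 (X w k)).
rewrite (Exp_ext N w0 (fun w => fine ((favg F (X w (r * T)%N))%:E + chi0 (X w (r * T)%N))%E) (fun w => psiR F chi0 (X w (r * T)%N))); last by move=> w; exact: hpsi.
rewrite (Exp_ext N w0 (fun w => fine ((favg F (X w (r * T + t.+1)%N))%:E + chi0 (X w (r * T + t.+1)%N))%E) (fun w => psiR F chi0 (X w (r * T + t).+1))); last first.
  by move=> w; rewrite addnS; exact: hpsi.
under eq_bigr => j _ do rewrite addnS.
exact: (main_sec T F gF L0 hF hL0 chi0 hchi0p hchi0c fc gc Lc chic hfc hLc
  (fun i => (hchic i).1) gamma x0 eta etabar hgamma X hX hx0 heta0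
  (fun k i => (heta k i).1) hn hb beta hbeta0 N w0 r t ht erefl).
Qed.
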